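(* For every $\varepsilon>0$ there exists $x_2=x_2(\varepsilon)$ such that for all $x\ge x_2$, $$\mathcal{J}(x) > \exp\left\{ (2-\varepsilon)\frac{\sqrt{\log x}}{\log\log x} \right\}.$$
   Context: A positive integer $n$ is a Jordan-Pólya number if it can be written as a product of factorials, i.e. $n=a_1!a_2!\cdots a_r!$ for some integer $r\ge 1$ and positive integers $a_1,\dots,a_r$ (so $1=1!$ is one). Let $\mathcal{J}$ be the set of Jordan-Pólya numbers and $\mathcal{J}(x)=\#\{n\le x: n\in\mathcal{J}\}$ its counting function. $\log$ denotes the natural logarithm. *)

(* Defs.v *)
From Stdlib Require Import Reals Arith List ClassicalEpsilon.
Open Scope R_scope.

Definition isJP (n : nat) : Prop :=
  exists l : list nat, l <> nil /\ Forall (fun a => (1 <= a)%nat) l /\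
    n = fold_right (fun a acc => (fact a * acc)%nat) 1%nat l.

Definition JPcount_nat (N : nat) : nat :=
  fold_right (fun n acc =>
     ((if excluded_middle_informative (isJP n) then 1 else 0) + acc)%nat)
   0%nat (seq 1 N).

Definition JPcount (x : R) : nat :=
  JPcount_nat (Z.to_nat (Int_part x)).

(* Main.v *)
Require Import Defs.
From Stdlib Require Import Reals.
Open Scope R_scope.
From Stdlib Require Import Lra Lia Psatz ZArith ClassicalEpsilon.


Lemma ln_le' x y : 0 < x -> x <= y -> ln x <= ln y.
Proof. intros hx hxy. destruct (Rle_lt_or_eq_dec _ _ hxy) as [h|h].
- left; apply ln_increasing; lra.
- rewrite h; lra. Qed.

Lemma ln_le_sub1 y : 0 < y -> ln y <= y - 1.
Proof. intros hy. pose proof (exp_ineq1_le (ln y)). rewrite exp_ln in H; lra. Qed.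

Lemma exp_INR_mul n a : exp (INR n * a) = exp a ^ n.
Proof. induction n as [|n IH].
- simpl. rewrite Rmult_0_l, exp_0. reflexivity.
- rewrite S_INR. replace ((INR n + 1) * a) with (INR n * a + a) by ring.
  rewrite exp_plus, IH. simpl. ring. Qed.

Lemma ln2_ge : 2/3 <= ln 2.
Proof.
assert (h1 : exp (1/24) <= 24/23).
{ pose proof (exp_ineq1_le (-(1/24))).
  assert (exp (1/24) * exp (-(1/24)) = 1).
  { rewrite <- exp_plus. replace (1/24 + -(1/24)) with 0 by ring. apply exp_0. }
  assert (0 < exp (1/24)) by apply exp_pos. nra. }
assert (h2 : exp (2/3) <= 2).
{ replace (2/3) with (INR 16 * (1/24)) by (simpl; field).
  rewrite exp_INR_mul.
  assert (0 <= exp (1/24)) by (left; apply exp_pos).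
  apply Rle_trans with ((24/23)^16).
  - apply pow_incr; lra.
  - simpl. lra. }
rewrite <- (ln_exp (2/3)). apply ln_le'. apply exp_pos. exact h2.
Qed.

Lemma floor_nat y : 0 <= y -> exists k : nat, INR k <= y < INR k + 1.
Proof.
intros hy. destruct (archimed y) as [h1 h2].
assert (hz : (0 <= up y - 1)%Z).
{ assert (IZR 0 < IZR (up y)) by (simpl; lra). apply lt_IZR in H. lia. }
exists (Z.to_nat (up y - 1)).
rewrite INR_IZR_INZ, Z2Nat.id; auto. rewrite minus_IZR. simpl. lra.
Qed.

Lemma le_Int (k : nat) x : INR k <= x -> (k <= Z.to_nat (Int_part x))%nat.
Proof.
intros h. destruct (base_Int_part x) as [h1 h2].
assert (IZR (Z.of_nat k) < IZR (Int_part x) + 1) by (rewrite <- INR_IZR_INZ; lra).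
rewrite <- plus_IZR in H. apply lt_IZR in H. lia.
Qed.

Lemma exp_cube t : 0 <= t -> (t/3)^3 <= exp t.
Proof.
intros ht. replace t with (INR 3 * (t/3)) at 2 by (simpl; field).
rewrite exp_INR_mul. apply pow_incr. split; [lra|].
pose proof (exp_ineq1_le (t/3)). lra.
Qed.

Lemma count_real t s nr Nr lg l4 LN :
  4000 <= t -> (t/3)^3 <= s -> 1 <= nr -> nr <= 16/25*s ->
  2/3 <= lg -> lg <= t + 28/100 -> 4/3 <= l4 -> 0 <= Nr ->
  (Nr + 1) * (2*nr*lg) > s*s -> LN <= 2 + 2*t ->
  Nr*l4 - LN > s/t.
Proof.
intros ht hs hn1 hn2 hl1 hl2 hl4 hN hK hLN.
assert (s0 : 0 < s).
{ assert (0 < (t/3)^3) by (apply pow_lt; lra). lra. }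
assert (hD : 2*nr*lg <= 128/100 * s * (t + 28/100)) by nra.
assert (h1 : s < (Nr+1) * (128/100) * (t + 28/100)).
{ assert (s*s < (Nr+1) * (128/100 * s * (t + 28/100))).
  { apply Rlt_le_trans with ((Nr + 1) * (2*nr*lg)); [lra|].
    apply Rmult_le_compat_l; lra. }
  nra. }
assert (h3 : (t/3)^3 = t*t*t/27) by (simpl; field).
assert (h2 : Nr + 1 >= t*t/35).
{ assert (t*t*t/27 < (Nr+1) * (128/100) * (t + 28/100)) by lra.
  assert (t + 28/100 <= 1001/1000 * t) by lra.
  assert (t*t*t/27 < (Nr+1) * (128/100) * (1001/1000*t)).
  { apply Rlt_le_trans with ((Nr+1) * (128/100) * (t + 28/100)); [lra|].
    apply Rmult_le_compat_l; nra. }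
  nra. }
assert (h4 : Nr >= t*t/36) by nra.
assert (h5 : Nr * (5333/100000*t - 3584/10000) >= 2*t*t + 328/100*t + 3584/10000).
{ assert (5333/100000*t - 3584/10000 >= 5/100 * t) by lra.
  assert (Nr * (5333/100000*t - 3584/10000) >= t*t/36 * (5/100*t)) by nra.
  nra. }
assert (goal : t*(Nr*l4 - LN) > s).
{ assert (t*(Nr*l4) >= t*(4/3*Nr)) by nra. nra. }
apply Rmult_lt_reg_l with t; [lra|].
replace (t * (s/t)) with s by (field; lra). lra.
Qed.

Lemma pi_real s nr Nr m lg l4 :
  100 <= s -> 16/25*s - 1 <= nr -> nr <= 16/25*s -> 1 <= nr -> 0 < lg -> 4/3 <= l4 ->
  nr*l4 <= 1 + (m+1)*lg -> m + 1 <= Nr -> Nr*(2*nr*lg) <= s*s -> False.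
Proof.
intros hs hn1 hn2 hn3 hlg hl4 H hm hK.
assert (nr*l4 <= 1 + Nr*lg) by nra.
assert (2*nr*nr*l4 <= 2*nr + s*s) by nra.
assert (2*nr*nr*(4/3) <= 2*nr*nr*l4) by nra.
nra.
Qed.

Lemma exp_le' x y : x <= y -> exp x <= exp y.
Proof. intros h. destruct (Rle_lt_or_eq_dec _ _ h) as [h'|h'].
- left; apply exp_increasing; exact h'.
- rewrite h'; lra. Qed.

Set Warnings "-notation-overridden".
From mathcomp Require Import all_boot zify.
Open Scope nat_scope.

Lemma cbin n : 4 ^ n <= n.*2.+1 * 'C(n.*2, n).
Proof.
elim: n => [|n IH] //.
have H1 := mul_bin_diag n.*2.+2 n.
have H2 := mul_bin_diag n.*2.+1 n.
have H3 : 'C(n.*2.+1, n.+1) = 'C(n.*2.+1, n).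
  rewrite -(bin_sub (n:=n.*2.+1) (m:=n)); last by lia.
  congr binomial; lia.
simpl in H1, H2.
rewrite doubleS.
have E : n.+1 * 'C(n.*2.+2, n.+1) = 2 * (n.*2.+1 * 'C(n.*2, n)).
  rewrite -H1 H2 H3. lia.
rewrite expnS.
have : n.+1 * (4 * 4 ^ n) <= n.+1 * (n.*2.+3 * 'C(n.*2.+2, n.+1)).
  have -> : n.+1 * (n.*2.+3 * 'C(n.*2.+2, n.+1)) = n.*2.+3 * (n.+1 * 'C(n.*2.+2, n.+1)) by lia.
  rewrite E. nia.
by rewrite leq_pmul2l.
Qed.

Lemma logn_fact_ext p m K : prime p -> m <= K ->
  logn p m`! = \sum_(1 <= k < K.+1) m %/ p ^ k.
Proof.
move=> pp mK; rewrite logn_fact //.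
have mK' : m.+1 <= K.+1 by lia.
rewrite [RHS](big_cat_nat _ (n:=m.+1)) //=.
rewrite [X in _ + X]big1_seq ?addn0 // => k /andP[_].
rewrite mem_iota => /andP[h1 _].
apply: divn_small.
have := ltn_expl k (prime_gt1 pp). lia.
Qed.

Lemma sum_le_min M T : \sum_(1 <= k < M.+1) (k <= T) = minn M T.
Proof.
elim: M => [|M IH]; first by rewrite big_geq // min0n.
rewrite big_nat_recr //= IH. by case: leqP => h; lia.
Qed.

Lemma logn_bin p n : prime p -> 0 < n -> p ^ logn p 'C(n.*2, n) <= n.*2.
Proof.
move=> pp n0.
have p1 := prime_gt1 pp.
set T := trunc_log p n.*2.
have HT : p ^ T <= n.*2 by apply: trunc_logP => //; lia.
have HT2 : n.*2 < p ^ T.+1 by apply: trunc_log_ltn.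
suff : logn p 'C(n.*2, n) <= T.
  move=> h; apply: leq_trans HT; by rewrite leq_pexp2l // ltnW.
have E : 'C(n.*2, n) * (n`! * (n.*2 - n)`!) = (n.*2)`! by apply: bin_fact; lia.
have Cp : 0 < 'C(n.*2, n) by rewrite bin_gt0; lia.
rewrite (_ : n.*2 - n = n) in E; last by lia.
have E2 : logn p (n.*2)`! = logn p 'C(n.*2, n) + (logn p n`! + logn p n`!).
  rewrite -E (lognM _ Cp); last by rewrite muln_gt0 !fact_gt0.
  by rewrite lognM ?fact_gt0.
rewrite (logn_fact_ext p (n.*2) (n.*2)) // in E2.
rewrite (logn_fact_ext p n (n.*2)) // in E2; last by lia.
have L : \sum_(1 <= k < n.*2.+1) n.*2 %/ p ^ k <=
   \sum_(1 <= k < n.*2.+1) (n %/ p ^ k + n %/ p ^ k + (k <= T)).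
  apply: leq_sum => k _.
  case: (leqP k T) => hk.
    have hq : 0 < p ^ k by rewrite expn_gt0; lia.
    move: (p ^ k) hq => q hq.
    have := divn_eq n q. have := ltn_pmod n hq.
    have := divn_eq n.*2 q. have := ltn_pmod n.*2 hq. nia.
  rewrite divn_small //=.
  apply: (leq_trans HT2); rewrite leq_pexp2l //; lia.
rewrite !big_split /= sum_le_min in L.
lia.
Qed.

Lemma prod_const_seq (s : seq nat) c : \prod_(i <- s) c = c ^ size s.
Proof. elim: s => [|a s IH]; first by rewrite big_nil. by rewrite big_cons IH expnS. Qed.

Lemma cheb n : 0 < n -> 'C(n.*2, n) <= n.*2 ^ size (primes 'C(n.*2, n)).
Proof.
move=> n0.
have Cp : 0 < 'C(n.*2, n) by rewrite bin_gt0; lia.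
rewrite {1}(prod_prime_decomp Cp) prime_decompE big_map /= -prod_const_seq.
rewrite big_seq [X in _ <= X]big_seq.
apply: leq_prod => p; rewrite mem_primes => /and3P[pp _ _].
exact: logn_bin p n pp n0.
Qed.

Lemma primes_le n p : 0 < n -> p \in primes 'C(n.*2, n) -> p <= n.*2.
Proof.
move=> n0 hp.
have pp : prime p by move: hp; rewrite mem_primes => /and3P[].
have := logn_bin p n pp n0.
have : 0 < logn p 'C(n.*2, n) by rewrite logn_gt0.
move=> h1 h2; apply: leq_trans h2.
rewrite -{1}(expn1 p) leq_pexp2l //; exact: prime_gt0.
Qed.

Fixpoint gen (ps : seq nat) : nat -> seq nat :=
  match ps with
  | [::] => fun _ => [:: 1]
  | q :: r => let g := gen r in
      fix h N := match N with 0 => g 0 | N'.+1 => g N'.+1 ++ map (muln q`!) (h N') end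
  end.

Lemma gen_size ps N : size (gen ps N) = 'C(N + size ps, size ps).
Proof.
elim: ps N => [|q r IH] N /=; first by rewrite bin0.
elim: N => [|N IHN] /=.
  by rewrite IH !add0n !binn.
rewrite size_cat size_map IHN IH.
rewrite (_ : N.+1 + (size r).+1 = (N.+1 + size r).+1); last by lia.
rewrite binS addnC. congr (_ + _); congr binomial; lia.
Qed.

Lemma gen_pos ps N v : v \in gen ps N -> 0 < v.
Proof.
elim: ps N v => [|q r IH] N v /=; first by rewrite inE => /eqP ->.
elim: N v => [|N IHN] v /=; first exact: IH.
rewrite mem_cat => /orP[]; first exact: IH.
case/mapP => w hw ->. rewrite muln_gt0 fact_gt0 /=. exact: IHN.
Qed.

Lemma logn_fact_small q p : prime q -> p < q -> logn q p`! = 0.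
Proof.
move=> pq hp; rewrite logn_fact //.
apply: big1_seq => k /andP[_]; rewrite mem_iota => /andP[h1 _].
apply: divn_small. apply: (leq_trans hp).
rewrite -{1}(expn1 q) leq_pexp2l //; exact: prime_gt0.
Qed.

Lemma gen_logn0 ps N v q : prime q -> all (fun p => p < q) ps ->
  v \in gen ps N -> logn q v = 0.
Proof.
move=> pq.
elim: ps N v => [|p r IH] N v /=; first by rewrite inE => _ /eqP ->; rewrite logn1.
move=> /andP[hp hr].
elim: N v => [|N IHN] v /=; first exact: IH.
rewrite mem_cat => /orP[]; first exact: IH.
case/mapP => w hw ->.
have wp : 0 < w := gen_pos (p :: r) N w hw.
rewrite lognM ?fact_gt0 //.
by rewrite logn_fact_small // IHN.
Qed.

Lemma logn_fact_self q : prime q -> 0 < logn q q`!.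
Proof.
move=> pq; rewrite logn_gt0 mem_primes pq fact_gt0 /=.
apply: dvdn_fact. by rewrite prime_gt0 /=.
Qed.

Lemma mulnI_pos m : 0 < m -> injective (muln m).
Proof. move=> hm a b h; apply/eqP; rewrite -(eqn_pmul2l hm); exact/eqP. Qed.

Lemma gen_uniq ps N : sorted (fun a b => b < a) ps -> all prime ps -> uniq (gen ps N).
Proof.
elim: ps N => [|q r IH] N //= hs /andP[pq pr].
have hr : sorted (fun a b => b < a) r := path_sorted hs.
have hall : all (fun p => p < q) r.
  apply: (order_path_min (leT := fun a b => b < a)) => //.
  move=> a b c h1 h2; exact: ltn_trans h2 h1.
elim: N => [|N IHN] /=; first exact: IH.
rewrite cat_uniq IH //= (map_inj_uniq (mulnI_pos _ (fact_gt0 q))) IHN andbT.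
apply/hasPn => x /mapP[w hw ->].
apply/negP => hin.
have h0 := gen_logn0 _ _ _ _ pq hall hin.
have wp : 0 < w := gen_pos (q :: r) N w hw.
move: h0; rewrite lognM ?fact_gt0 //.
have := logn_fact_self _ pq. lia.
Qed.

Lemma gen_bound ps N K v : all (fun p => p <= K) ps -> v \in gen ps N -> v <= K`! ^ N.
Proof.
elim: ps N v => [|q r IH] N v /=.
  move=> _; rewrite inE => /eqP ->; by rewrite expn_gt0 fact_gt0.
move=> /andP[hq hr].
elim: N v => [|N IHN] v /=; first exact: IH.
rewrite mem_cat => /orP[]; first exact: IH.
case/mapP => w hw ->.
rewrite expnS; apply: leq_mul; [exact: leq_fact | exact: IHN].
Qed.

Lemma fact_eq n : fact n = n`!.
Proof. elim: n => [|n IH] //=. by rewrite factS -IH. Qed.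

Lemma gen_JP ps N v : all (fun p => 0 < p) ps -> v \in gen ps N -> isJP v.
Proof.
elim: ps N v => [|q r IH] N v /=.
  move=> _; rewrite inE => /eqP ->. exists [:: 1]; split => //; split.
    constructor => //. 
  by [].
move=> /andP[hq hr].
elim: N v => [|N IHN] v /=; first exact: IH.
rewrite mem_cat => /orP[]; first exact: IH.
case/mapP => w hw ->.
have [l [h1 [h2 h3]]] := IHN w hw.
exists (q :: l); split => //; split.
  constructor => //. apply/leP; exact: hq.
by rewrite /= h3 fact_eq.
Qed.

Definition Pb (n : nat) : bool := if excluded_middle_informative (isJP n) then true else false.

Lemma JPcount_count N : JPcount_nat N = count Pb (iota 1 N).
Proof.
rewrite /JPcount_nat.
have -> : List.seq 1 N = iota 1 N.
  by move: 1; elim: N => [|N IH] a //=.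
elim: (iota 1 N) => [|a s IH] //=.
rewrite IH /Pb. by case: excluded_middle_informative.
Qed.

Lemma count_lb N l : uniq l -> (forall v, v \in l -> (0 < v <= N) /\ isJP v) ->
  size l <= JPcount_nat N.
Proof.
move=> ul hl; rewrite JPcount_count -size_filter.
apply: uniq_leq_size => // v hv.
have [h1 h2] := hl v hv.
rewrite mem_filter mem_iota /Pb.
case: excluded_middle_informative => // _.
Qed.

Lemma key_nat n N X : 0 < n -> N <= size (primes 'C(n.*2, n)) ->
  (n.*2)`! ^ N <= X -> 'C(N.*2, N) <= JPcount_nat X.
Proof.
move=> n0 hN hX.
set ps := take N (rev (primes 'C(n.*2, n))).
have sz : size ps = N by rewrite /ps size_takel // size_rev.
have mem : forall p, p \in ps -> prime p /\ p <= n.*2.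
  move=> p hp; have hp' : p \in primes 'C(n.*2, n) by rewrite -mem_rev; exact: mem_take hp.
  split; last exact: primes_le hp'.
  by move: hp'; rewrite mem_primes => /and3P[].
have -> : 'C(N.*2, N) = size (gen ps N) by rewrite gen_size sz addnn.
apply: count_lb.
  apply: gen_uniq.
    rewrite /ps; apply: take_sorted. rewrite rev_sorted. exact: sorted_primes.
  apply/allP => p hp; exact: (mem p hp).1.
move=> v hv; split; last first.
  apply: (gen_JP ps N) => //. apply/allP => p hp; exact: prime_gt0 (mem p hp).1.
rewrite (gen_pos ps N v hv) /=.
apply: leq_trans hX. apply: (gen_bound ps) => //.
apply/allP => p hp; exact: (mem p hp).2.
Qed.

Open Scope R_scope.
Lemma INR_addn a b : INR (a + b)%nat = INR a + INR b.
Proof. exact: plus_INR. Qed.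
Lemma INR_muln a b : INR (a * b)%nat = INR a * INR b.
Proof. exact: mult_INR. Qed.
Lemma INR_expn a e : INR (a ^ e)%nat = INR a ^ e.
Proof. elim: e => [|e IH] //=. by rewrite expnS INR_muln IH. Qed.
Lemma INR_double a : INR (a.*2) = 2 * INR a.
Proof. by rewrite -addnn INR_addn; ring. Qed.
Lemma leq_exp_base a b e : (a <= b -> a ^ e <= b ^ e)%nat.
Proof. move=> h; elim: e => [|e IH] //. rewrite !expnS; exact: leq_mul. Qed.

Lemma fact_le_pow k : (k`! <= k ^ k)%nat.
Proof.
elim: k => [|k IH] //. rewrite factS expnS leq_mul2l /=.
apply: (leq_trans IH). case: k {IH} => [|k] //. by rewrite leq_exp2r.
Qed.

Theorem mainTheorem2 : forall eps : R, 0 < eps ->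
  exists x2 : R, forall x : R, x2 <= x ->
    INR (JPcount x) > exp ((2 - eps) * (sqrt (ln x) / ln (ln x))).
Proof.
move=> eps heps. exists (exp (exp 8000)) => x hx.
have x0 : 0 < x by have := exp_pos (exp 8000); lra.
set L := ln x.
have hL : exp 8000 <= L.
  rewrite /L -(ln_exp (exp 8000)); apply: ln_le' => //; apply: exp_pos.
have L0 : 0 < L by have := exp_pos 8000; lra.
set s := sqrt L.
have ss : s * s = L by rewrite /s; apply: sqrt_sqrt; lra.
have s0 : 0 < s by apply: sqrt_lt_R0.
set t := ln s.
have hst : exp t = s by rewrite /t exp_ln.
have e4 : exp 8000 = exp 4000 * exp 4000 by rewrite -exp_plus; congr exp; ring.
have ht : 4000 <= t.
  have hs4 : exp 4000 <= s.
    have := exp_pos 4000. nra.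
  rewrite /t -(ln_exp 4000); apply: ln_le' => //; apply: exp_pos.
have hs3 : (t/3)^3 <= s by rewrite -hst; apply: exp_cube; lra.
have hs100 : 100 <= s.
  have : (t/3)^3 = t*t*t/27 by simpl; field.
  nra.
have hlnL : ln L = 2 * t by rewrite -ss ln_mult // /t; ring.
have [n [hn1 hn2]] := floor_nat (16/25 * s) ltac:(lra).
set nr := INR n in hn1 hn2.
have n0 : (0 < n)%N.
  apply/ltP; apply: INR_lt; rewrite /= -/nr; lra.
have nr1 : 1 <= nr by rewrite /nr -[1]/(INR 1); apply: le_INR; apply/leP.
set lg := ln (2 * nr).
have hlg1 : 2/3 <= lg.
  apply: Rle_trans ln2_ge _. apply: ln_le'; lra.
have hlg2 : lg <= t + 28/100.
  have h1 : lg <= ln (128/100 * s) by apply: ln_le'; lra.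
  rewrite ln_mult in h1; try lra.
  have := ln_le_sub1 (128/100) ltac:(lra). rewrite -/t in h1. move=> ?; lra.
have D0 : 0 < 2 * nr * lg by apply: Rmult_lt_0_compat; lra.
have [N [hN1 hN2]] := floor_nat (s * s / (2 * nr * lg)) ltac:(apply: Rle_mult_inv_pos; nra).
set Nr := INR N in hN1 hN2.
have Nr0 : 0 <= Nr by apply: pos_INR.
have hK1 : Nr * (2 * nr * lg) <= s * s.
  have : s * s = s * s / (2 * nr * lg) * (2 * nr * lg) by field; lra.
  nra.
have hK2 : (Nr + 1) * (2 * nr * lg) > s * s.
  have : s * s = s * s / (2 * nr * lg) * (2 * nr * lg) by field; lra.
  nra.
have l4 : 4/3 <= ln 4.
  have -> : ln 4 = ln 2 + ln 2 by rewrite -ln_mult; try lra; congr ln; ring.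
  have := ln2_ge; move=> ?; lra.
have ln2le1 : ln 2 <= 1 by have := ln_le_sub1 2 ltac:(lra); move=> ?; lra.
set m := size (primes 'C(n.*2, n)).
have hNm : (N <= m)%N.
  rewrite leqNgt; apply/negP => hmN.
  have h1 := cbin n. have h2 := cheb n n0.
  have h3 : (4 ^ n <= (n.*2).+1 * n.*2 ^ m)%N.
    apply: (leq_trans h1); rewrite leq_mul2l; apply/orP; right; exact: h2.
  have h4 := le_INR _ _ (elimT leP h3).
  have four : INR 4 = 4 by simpl; ring.
  rewrite INR_muln !INR_expn (S_INR (n.*2)) INR_double four -/nr in h4.
  have h5 := ln_le' _ _ (pow_lt 4 n ltac:(lra)) h4.
  rewrite ln_mult in h5; first last.
  - apply: pow_lt; lra.
  - lra.
  rewrite !ln_pow in h5; try lra.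
  rewrite -/nr -/lg in h5.
  have h6 : ln (2 * nr + 1) <= 1 + lg.
    have h : ln (2 * nr + 1) <= ln (2 * (2 * nr)) by apply: ln_le'; lra.
    rewrite ln_mult in h; try lra. rewrite -/lg in h. lra.
  have hm1 : INR m + 1 <= Nr.
    rewrite -[1]/(INR 1) -plus_INR /Nr; apply: le_INR; move/leP: hmN; lia.
  apply: (pi_real s nr Nr (INR m) lg (ln 4)) => //; try lra.
have hX : ((n.*2)`! ^ N <= Z.to_nat (Int_part x))%N.
  apply/leP; apply: le_Int.
  have h1 : ((n.*2)`! ^ N <= n.*2 ^ (n.*2 * N))%N.
    rewrite expnM; apply: leq_exp_base; exact: fact_le_pow.
  apply: Rle_trans (le_INR _ _ (elimT leP h1)) _.
  rewrite INR_expn INR_double -/nr.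
  rewrite -(exp_ln (2 * nr)); last lra.
  rewrite -exp_INR_mul -(exp_ln x) //; apply: exp_le'.
  rewrite INR_muln INR_double -/nr -/Nr -/lg -/L -ss. nra.
have hJ := key_nat n N _ n0 hNm hX.
rewrite /JPcount.
set J := JPcount_nat (Z.to_nat (Int_part x)) in hJ *.
have hc := cbin N.
have hc2 : (4 ^ N <= (N.*2).+1 * J)%N.
  apply: (leq_trans hc); rewrite leq_mul2l; apply/orP; right; exact: hJ.
have h4 := le_INR _ _ (elimT leP hc2).
have four : INR 4 = 4 by simpl; ring.
rewrite INR_muln INR_expn (S_INR (N.*2)) INR_double four -/Nr in h4.
have p4 : 0 < 4 ^ N by apply: pow_lt; lra.
have J0 : 0 < INR J.
  have : 0 < (2 * Nr + 1) * INR J by lra.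
  have := pos_INR J. nra.
have h5 := ln_le' _ _ p4 h4.
rewrite ln_mult in h5; try lra.
rewrite ln_pow in h5; try lra.
rewrite -/Nr in h5.
have hLN : ln (2 * Nr + 1) <= 2 + 2 * t.
  have D1 : 1 <= 2 * nr * lg by nra.
  have Nrs : Nr <= s * s.
    move: hK1 D1; move: (2 * nr * lg) => D hD1 hD2. nra.
  have h : ln (2 * Nr + 1) <= ln (3 * (s * s)) by apply: ln_le'; nra.
  rewrite !ln_mult in h; try nra. rewrite -/t in h.
  have := ln_le_sub1 3 ltac:(lra). move=> ?; lra.
have hcr := count_real t s nr Nr lg (ln 4) (ln (2 * Nr + 1)) ht hs3 nr1
   ltac:(lra) hlg1 hlg2 l4 Nr0 hK2 hLN.
have hlnJ : s / t < ln (INR J) by lra.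
rewrite -/L hlnL -/s.
rewrite -(exp_ln (INR J)) //.
apply: Rle_lt_trans (exp_increasing _ _ hlnJ).
apply: exp_le'.
have t0 : 0 < t by lra.
have : s / (2 * t) * 2 = s / t by field; lra.
have : 0 < s / (2 * t) by apply: Rdiv_lt_0_compat; lra.
nra.
Qed.
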